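(* Let $R$ be an associative unital division ring over a field of characteristic $0$, equipped with two commuting derivations $\partial_x,\partial_y$ (written $F_x=\partial_x F$, $F_y=\partial_y F$). Let $\varphi\in R$ and for $n\geq1$ put $$\Theta_n=\bigl(\partial_x^{\,i-1}\partial_y^{\,j-1}\varphi\bigr)_{1\leq i,j\leq n},\qquad \theta_n=|\Theta_n|_{nn},$$ with the convention $\theta_0^{-1}:=0$, and assume all quasideterminants involved are defined and all $\theta_n$ are invertible. Then for all $n\geq1$, $$\bigl(\theta_{n,x}\theta_n^{-1}\bigr)_y=\theta_{n+1}\theta_n^{-1}-\theta_n\theta_{n-1}^{-1}.$$
   Context: A derivation of $R$ is an $F$-linear map $\partial:R\to R$ vanishing on $F$ and satisfying $\partial(FG)=\partial(F)G+F\partial(G)$. For an $n\times n$ matrix $X$ over $R$, the quasideterminant is $|X|_{ij}=x_{ij}-r_i^j(X^{ij})^{-1}c_j^i$, where $X^{ij}$ is $X$ with row $i$ and column $j$ deleted, $r_i^j$ is row $i$ without its $j$-th entry, $c_j^i$ is column $j$ without its $i$-th entry; $|X|_{11}=x_{11}$ for $n=1$. *)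

(* Defs.v *)
From HB Require Import structures.
From mathcomp Require Import all_boot all_order all_algebra.

Set Implicit Arguments.
Unset Strict Implicit.
Unset Printing Implicit Defensive.

Import GRing.Theory.
Local Open Scope ring_scope.

Definition division_ring (R : unitRingType) : Prop :=
  forall x : R, x != 0 -> x \is a GRing.unit.

Definition is_derivation (F : fieldType) (R : unitAlgType F) (d : R -> R) : Prop :=
  [/\ forall (a : F) (u v : R), d (a *: u + v) = a *: d u + d v,
      forall a : F, d (a%:A) = 0
    & forall u v : R, d (u * v) = d u * v + u * d v].

Definition mx_inverse (R : pzRingType) (n : nat) (A B : 'M[R]_n) : Prop :=
  A *m B = 1%:M /\ B *m A = 1%:M.

Definition qminor (R : pzRingType) (n : nat) (X : 'M[R]_n.+1) (i j : 'I_n.+1)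
  : 'M[R]_n := \matrix_(k, l) X (lift i k) (lift j l).

Definition qrow (R : pzRingType) (n : nat) (X : 'M[R]_n.+1) (i j : 'I_n.+1)
  : 'rV[R]_n := \row_l X i (lift j l).

Definition qcol (R : pzRingType) (n : nat) (X : 'M[R]_n.+1) (i j : 'I_n.+1)
  : 'cV[R]_n := \col_k X (lift i k) j.

(* For a 1x1 matrix the minor is 0x0, hence trivially invertible, and the
   correction term is the empty sum, so |X|_{11} = x_11. *)
Definition is_qdet (R : pzRingType) (n : nat) (X : 'M[R]_n.+1) (i j : 'I_n.+1)
  (q : R) : Prop :=
  exists Y : 'M[R]_n, mx_inverse (qminor X i j) Y /\
    q = X i j - (qrow X i j *m Y *m qcol X i j) 0 0.

(* Theta_{m+1} = (dx^(i) dy^(j) phi)_{0 <= i,j <= m}, an (m+1)x(m+1) matrix. *)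
Definition Theta (R : pzRingType) (dx dy : R -> R) (phi : R) (m : nat)
  : 'M[R]_m.+1 := \matrix_(i, j) iter i dx (iter j dy phi).

(* Main.v *)
Require Import Defs.
From HB Require Import structures.
From mathcomp Require Import all_boot all_order all_algebra.
Set Implicit Arguments.
Unset Strict Implicit.
Unset Printing Implicit Defensive.
Import GRing.Theory.
Local Open Scope ring_scope.

Definition Bf (R : pzRingType) (m : nat) (P : nat -> nat -> R) (Y : 'M[R]_m) (k : nat) : R :=
  oapp (fun k' : 'I_m => \sum_(l < m) P m l * Y l k') 0 (insub k).

Lemma BfE (R : pzRingType) (m : nat) (P : nat -> nat -> R) (Y : 'M[R]_m) (k : 'I_m) :
  Bf P Y k = \sum_(l < m) P m l * Y l k.
Proof. by rewrite /Bf valK. Qed.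

Lemma Bf_ge (R : pzRingType) (m : nat) (P : nat -> nat -> R) (Y : 'M[R]_m) (k : nat) :
  (m <= k)%N -> Bf P Y k = 0.
Proof. by move=> hk; rewrite /Bf insubN // -leqNgt. Qed.

Lemma F1 (R : pzRingType) (m : nat) (P : nat -> nat -> R) (Y : 'M[R]_m) :
  Y *m (\matrix_(k < m, l < m) P k l) = 1%:M ->
  forall j, (j < m)%N -> \sum_(k < m) Bf P Y k * P k j = P m j.
Proof.
move=> YM j hj.
pose r := \row_(l < m) P m l.
have := congr1 (fun A : 'M_(1, m) => A 0 (Ordinal hj)) (congr1 (mulmx r) YM).
rewrite mulmx1 mulmxA !mxE => <-.
apply: eq_bigr => k _; rewrite !mxE BfE; congr (_ * _).
by apply: eq_bigr => l _; rewrite mxE.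
Qed.

Lemma keyK (R : pzRingType) m (P : nat -> nat -> R) (Y : 'M[R]_m) (h : nat -> R) :
  (\matrix_(k < m, l < m) P k l) *m Y = 1%:M ->
  Y *m (\matrix_(k < m, l < m) P k l) = 1%:M ->
  (forall j, (j < m)%N -> \sum_(k < m.+1) h k * P k j = 0) ->
  \sum_(k < m.+1) h k * P k m = h m * (P m m - \sum_(k < m) Bf P Y k * P k m).
Proof.
move=> MY YM hz.
set d := \row_(k < m) (h k + h m * Bf P Y k).
have dM : d *m (\matrix_(k < m, l < m) P k l) = 0.
  apply/rowP => j; rewrite !mxE.
  rewrite (eq_bigr (fun k : 'I_m => h k * P k j + h m * (Bf P Y k * P k j))); last first.
    by move=> k _; rewrite !mxE mulrDl mulrA.
  rewrite big_split /= -mulr_sumr F1 //.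
  by have := hz j (ltn_ord j); rewrite big_ord_recr.
have d0 : d = 0 by rewrite -[d]mulmx1 -MY mulmxA dM mul0mx.
have dk : forall k : 'I_m, h k = - (h m * Bf P Y k).
  move=> k; have := congr1 (fun A : 'rV_m => A 0 k) d0; rewrite !mxE => /eqP.
  by rewrite addr_eq0 => /eqP.
rewrite big_ord_recr /= mulrBr mulr_sumr.
rewrite (eq_bigr (fun k : 'I_m => - (h m * (Bf P Y k * P k m)))); last first.
  by move=> k _; rewrite dk mulNr mulrA.
by rewrite sumrN addrC.
Qed.
Definition PP (R : pzRingType) (dx dy : R -> R) (phi : R) (i j : nat) : R :=
  iter i dx (iter j dy phi).

Lemma bridge (R : pzRingType) (dx dy : R -> R) (phi : R) m th :
  is_qdet (Theta dx dy phi m) ord_max ord_max th ->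
  exists Y : 'M[R]_m,
   [/\ (\matrix_(k < m, l < m) PP dx dy phi k l) *m Y = 1%:M,
       Y *m (\matrix_(k < m, l < m) PP dx dy phi k l) = 1%:M &
       th = PP dx dy phi m m - \sum_(k < m) Bf (PP dx dy phi) Y k * PP dx dy phi k m].
Proof.
case=> Y [[MY YM] ->].
have qm : qminor (Theta dx dy phi m) ord_max ord_max
          = \matrix_(k < m, l < m) PP dx dy phi k l.
  by apply/matrixP => k l; rewrite !mxE !lift_max.
exists Y; split; rewrite -?qm //.
rewrite !mxE /=; congr (_ - _).
apply: eq_bigr => k _; rewrite !mxE BfE lift_max; congr (_ * _).
by apply: eq_bigr => l _; rewrite !mxE lift_max.
Qed.


Lemma derD (F : fieldType) (R : unitAlgType F) (d : R -> R) :
  is_derivation d -> forall u v, d (u + v) = d u + d v.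
Proof. by case=> hl _ _ u v; rewrite -[u]scale1r hl !scale1r. Qed.

Lemma der0 (F : fieldType) (R : unitAlgType F) (d : R -> R) :
  is_derivation d -> d 0 = 0.
Proof.
move=> hd; have := derD hd 0 0; rewrite addr0 => /eqP.
by rewrite -subr_eq subrr eq_sym => /eqP.
Qed.

Lemma derB (F : fieldType) (R : unitAlgType F) (d : R -> R) :
  is_derivation d -> forall u v, d (u - v) = d u - d v.
Proof.
move=> hd u v; have := derD hd v (u - v); rewrite addrC subrK => ->.
by rewrite addrAC subrr add0r.
Qed.

Lemma der_sum (F : fieldType) (R : unitAlgType F) (d : R -> R) :
  is_derivation d -> forall n (G : 'I_n -> R),
  d (\sum_(i < n) G i) = \sum_(i < n) d (G i).
Proof. by move=> hd n G; apply: (big_morph d (derD hd) (der0 hd)). Qed.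

Definition good (R : pzRingType) (P : nat -> nat -> R) m (Y : 'M[R]_m) (th : R) :=
  [/\ (\matrix_(k < m, l < m) P k l) *m Y = 1%:M,
      Y *m (\matrix_(k < m, l < m) P k l) = 1%:M &
      th = P m m - \sum_(k < m) Bf P Y k * P k m].

Theorem proposition3p12 (F : fieldType) (R : unitAlgType F)
  (dx dy : R -> R) (phi : R) (theta : nat -> R) :
  [pchar F] =i pred0 ->
  division_ring R ->
  is_derivation dx -> is_derivation dy ->
  (forall u : R, dx (dy u) = dy (dx u)) ->
  (forall m : nat, is_qdet (Theta dx dy phi m) ord_max ord_max (theta m)) ->
  (forall m : nat, theta m \is a GRing.unit) ->
  forall m : nat,
    dy (dx (theta m) * (theta m)^-1) =
      theta m.+1 * (theta m)^-1
      - theta m * (if m is m'.+1 then (theta m')^-1 else 0).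
Proof.
move=> _ _ hdx hdy comm hq hu n.
have dxM : forall u v, dx (u * v) = dx u * v + u * dx v by case: hdx.
have dyM : forall u v, dy (u * v) = dy u * v + u * dy v by case: hdy.
have br : forall m, exists Y : 'M[R]_m, good (PP dx dy phi) Y (theta m).
  move=> m; have [Y [h1 h2 h3]] := bridge (hq m); by exists Y; split.
set P := PP dx dy phi.
have dxP : forall i j, dx (P i j) = P i.+1 j by [].
have dyP : forall i j, dy (P i j) = P i j.+1.
  move=> i j; rewrite /P /PP /=; elim: i => [|i IH] //=.
  by rewrite -comm IH.
have Bstep : forall m (Y0 : 'M[R]_m) (Y1 : 'M[R]_m.+1), good P Y0 (theta m) -> good P Y1 (theta m.+1) ->
    dy (Bf P Y1 m) * theta m = theta m.+1.
  move=> m Y0 Y1 [MY0 YM0 e0] [MY1 YM1 e1].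
  have f1 := F1 YM1.
  have hz : forall j, (j < m)%N -> \sum_(k < m.+1) dy (Bf P Y1 k) * P k j = 0.
    move=> j hj; have := congr1 dy (f1 j (ltnW hj)).
    rewrite der_sum // dyP; under eq_bigr do rewrite dyM dyP.
    rewrite big_split /= f1 //.
    by move/(congr1 (fun z => z - P m.+1 j.+1)); rewrite addrK subrr.
  have := keyK (h := fun k => dy (Bf P Y1 k)) MY0 YM0 hz; rewrite -e0 => <-.
  have := congr1 dy (f1 m (ltnSn m)).
  rewrite der_sum // dyP; under eq_bigr do rewrite dyM dyP.
  rewrite big_split e1 => <-.
  by rewrite addrK.
have Astep : forall m (Y0 : 'M[R]_m) (Y1 : 'M[R]_m.+1), good P Y0 (theta m) ->
    good P Y1 (theta m.+1) ->
    dx (theta m) = (Bf P Y1 m - Bf P Y0 m.-1) * theta m.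
  move=> m Y0 Y1 [MY0 YM0 e0] [MY1 YM1 e1].
  pose g k := dx (Bf P Y0 k) + (if k is k'.+1 then Bf P Y0 k' else 0).
  have gsum : forall j, \sum_(k < m.+1) g k * P k j =
      \sum_(k < m) dx (Bf P Y0 k) * P k j + \sum_(k < m) Bf P Y0 k * P k.+1 j.
    move=> j; rewrite /g; under eq_bigr do rewrite mulrDl.
    rewrite big_split; congr (_ + _).
      by rewrite big_ord_recr /= (Bf_ge P Y0 (leqnn m)) der0 // mul0r addr0.
    by rewrite big_ord_recl /= mul0r add0r; apply: eq_bigr => k _.
  have dxe : forall j, (j < m)%N -> \sum_(k < m) dx (Bf P Y0 k) * P k j
      + \sum_(k < m) Bf P Y0 k * P k.+1 j = P m.+1 j.
    move=> j hj; have := congr1 dx (F1 YM0 hj).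
    rewrite der_sum //; under eq_bigr do rewrite dxM.
    by rewrite big_split => hh; exact: hh.
  pose h k := Bf P Y1 k - g k.
  have hz : forall j, (j < m)%N -> \sum_(k < m.+1) h k * P k j = 0.
    move=> j hj; rewrite /h; under eq_bigr do rewrite mulrBl.
    by rewrite sumrB gsum dxe // F1 ?subrr //; exact: ltnW.
  have := keyK (h := h) MY0 YM0 hz; rewrite -e0.
  have gen : forall (f : nat -> R) n, (forall k, (n <= k)%N -> f k = 0) ->
      (if n is k'.+1 then f k' else 0) = f n.-1.
    by move=> f [|k] hf //=; rewrite hf.
  have -> : h m = Bf P Y1 m - Bf P Y0 m.-1.
    by rewrite /h /g (Bf_ge P Y0 (leqnn m)) der0 // add0r (gen (Bf P Y0) m (fun k hk => Bf_ge P Y0 hk)).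
  move=> <-; rewrite /h; under eq_bigr do rewrite mulrBl.
  rewrite sumrB gsum F1 // e0 derB // der_sum //; under eq_bigr do rewrite dxM.
  by rewrite big_split.
have [Y0 g0] := br n; have [Y1 g1] := br n.+1.
rewrite (Astep n Y0 Y1 g0 g1) -mulrA mulrV // mulr1 derB //.
rewrite -(Bstep n Y0 Y1 g0 g1) mulrK //.
congr (_ - _).
case: n Y0 Y1 g0 g1 {Astep} => [|n] Y0 Y1 g0 g1 /=.
  by rewrite Bf_ge // der0 // mulr0.
have [Yn gn] := br n.
by rewrite -(Bstep n Yn Y0 gn g0) mulrK.
Qed.
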